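(* Let $\lambda_h>0$. For every $x>0$, every $\Psi\in\mathcal L$ and every nondecreasing function $g:[0,\infty)\to[0,\infty)$, $$A_{\lambda_h}(g;x,\Psi)\le_{\mathrm{st}}A_{\lambda_h}(g;x,\Psi_\infty).$$
   Context: $\mathcal L$ is the set of all bivariate cdfs with support in $(0,\infty)\times(0,\infty]$. For $\Psi\in\mathcal L$, $G(s)=\Psi(s,\infty)$. $\Psi_\infty$ denotes the cdf of a random vector $(S,Y)$ with $S\sim G$ and $Y=\infty$ almost surely, so that all customers join. The $M/G(\Psi)/1+H(\Psi)$ queue with rate $\lambda_h$ and initial workload $x$ is defined as follows. - It is a single-server FCFS queue with infinite waiting room. - There is one initial customer with remaining service $x$. - Arrivals form a Poisson process of rate $\lambda_h$. - $(S_i,Y_i)$ are iid with cdf $\Psi$ and independent of the arrivals. - The $i$-th arrival at time $T_i$ joins if and only if $Y_i\ge W(T_i-)$, where $W$ is the workload (decreasing at unit rate while positive), and if he joins he adds $S_i$. $W_{\lambda_h}(\cdot;x,\Psi)$ denotes the workload and $\tau_{\lambda_h}(x;\Psi)$ its first hitting time of $0$. Define $$A_{\lambda_h}(g;x,\Psi)=\int_0^{\tau_{\lambda_h}(x;\Psi)}g(W_{\lambda_h}(t;x,\Psi))\,dt.$$ $X\le_{\mathrm{st}}Y$ means $P(X>s)\le P(Y>s)$ for all $s$. *)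

(* Defs.v *)
From HB Require Import structures.
From mathcomp Require Import all_boot all_order all_algebra.
From mathcomp Require Import all_classical all_reals all_analysis measurable_realfun.
Set Implicit Arguments. Unset Strict Implicit. Unset Printing Implicit Defensive.
Import Order.TTheory GRing.Theory Num.Theory.
Import numFieldNormedType.Exports.
Local Open Scope classical_set_scope.
Local Open Scope ring_scope.
Local Open Scope ereal_scope.

Section Queue.
Variable R : realType.

Definition expcdf (lam t : R) : R :=
  if (t < 0)%R then 0%R else (1 - expR (- (lam * t)))%R.

Definition in_L (Psi : R -> \bar R -> R) : Prop :=
  exists mu : probability (R * \bar R)%type R,
    mu ([set z | (0 < z.1)%R /\ 0 < z.2]) = 1 /\
    forall (s : R) (y : \bar R),
      (Psi s y)%:E = mu ([set z | (z.1 <= s)%R /\ z.2 <= y]).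

(** Psi_inf: cdf of (S, +oo) with S ~ G, G(s) = Psi(s, +oo). *)
Definition Psi_inf (Psi : R -> \bar R -> R) (s : R) (y : \bar R) : R :=
  if y == +oo then Psi s +oo else 0%R.

(** Input of the M/G(Psi)/1+H(Psi) queue on a probability space:
    interarrival times [e i] (iid Exp(lam)), marks [(S i, Y i)] (iid with
    joint cdf Psi), all mutually independent; this is stated by giving the
    joint cdf of the first n triples, which determines the law of the whole
    sequence. The i-th arrival time is e 0 + ... + e i. *)
Definition queue_input (d : measure_display) (T : measurableType d)
  (P : probability T R) (lam : R) (Psi : R -> \bar R -> R)
  (e S : nat -> T -> R) (Y : nat -> T -> \bar R) : Prop :=
  [/\ forall i, measurable_fun setT (e i),
      forall i, measurable_fun setT (S i),
      forall i, measurable_fun setT (Y i),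
      forall i w, (0 < e i w)%R &
      forall (n : nat) (t s : nat -> R) (y : nat -> \bar R),
        P (\bigcap_(i in [set i | (i < n)%N])
             [set w | (e i w <= t i)%R /\ (S i w <= s i)%R /\ Y i w <= y i])
        = (\prod_(i < n) (expcdf lam (t i) * Psi (s i) (y i)))%:E ].

(** time of the n-th event (arrival n-1; 0 for n = 0) *)
Definition start (e : nat -> R) (n : nat) : R := (\sum_(i < n) e i)%R.

(** workload just after the n-th event (just after arrival n-1), as long as
    the system has not emptied; 0 once it has emptied. *)
Fixpoint wpost (x : R) (e S : nat -> R) (Y : nat -> \bar R) (n : nat) : R :=
  match n with
  | 0%N => x
  | n'.+1 =>
    let v := (wpost x e S Y n' - e n')%R in     (* = W(T_n' -) *)
    if (0 < v)%R then
      (v + (if (v%:E <= Y n')%E then S n' else 0))%R (* joins iff Y >= W(T-) *)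
    else 0%R
  end.

(** workload at time t (up to the end of the busy period; 0 afterwards) *)
Definition workload (x : R) (e S : nat -> R) (Y : nat -> \bar R) (t : R) : R :=
  let n := xget 0%N [set n | (start e n <= t)%R /\ (t < start e n.+1)%R] in
  Num.max (wpost x e S Y n - (t - start e n))%R 0%R.

(** first hitting time of 0 (+oo if never) *)
Definition tau (x : R) (e S : nat -> R) (Y : nat -> \bar R) : \bar R :=
  ereal_inf [set t%:E | t in [set t | (0 <= t)%R /\ workload x e S Y t = 0%R]].

Definition Aq (g : R -> R) (x : R) (e S : nat -> R) (Y : nat -> \bar R) : \bar R :=
  \int[lebesgue_measure]_(t in [set t | (0 <= t)%R /\ t%:E < tau x e S Y])
     (g (workload x e S Y t))%:E.

End Queue.

(* Main.v *)
Require Import Defs.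
From HB Require Import structures.
From mathcomp Require Import all_boot all_order all_algebra.
From mathcomp Require Import all_classical all_reals all_analysis measurable_realfun.
Import Order.TTheory GRing.Theory Num.Theory.
Local Open Scope classical_set_scope.
Local Open Scope ring_scope.
Local Open Scope ereal_scope.


Section Omega.
Variable R : realType.
Definition trip := (R * R * \bar R)%type.
Definition Om0 := nat -> trip.
HB.instance Definition _ := Choice.on Om0.
HB.instance Definition _ := isPointed.Build Om0 (fun _ => (0%R, 0%R, +oo)).

Definition cyl (n : nat) (t s : nat -> R) (y : nat -> \bar R) : set Om0 :=
  [set w | forall i, (i < n)%N -> ((w i).1.1 <= t i)%R /\ ((w i).1.2 <= s i)%R /\ (w i).2 <= y i].
Definition Gcyl : set (set Om0) := [set C | exists n t s y, C = cyl n t s y].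
Definition Om := g_sigma_algebraType Gcyl.

Check (Om : measurableType _).

Definition ce i (w : Om) : R := (w i).1.1.
Definition cs i (w : Om) : R := (w i).1.2.
Definition cy i (w : Om) : \bar R := (w i).2.

Lemma bound_nat (f : nat -> R) n : exists k : nat, forall j, (j < n)%N -> (f j <= k%:R)%R.
Proof.
elim: n => [|n [k Hk]]; first by exists 0%N.
have [m Hm] : exists m : nat, (f n <= m%:R)%R.
  exists (Num.truncn `|f n|).+1; apply: (le_trans (ler_norm _)).
  exact/ltW/truncnS_gt.
exists (maxn k m) => j; rewrite ltnS leq_eqVlt => /orP [/eqP ->|/Hk hj].
  by apply: (le_trans Hm); rewrite ler_nat leq_maxr.
by apply: (le_trans hj); rewrite ler_nat leq_maxl.
Qed.

Lemma cyl_meas n t s y : measurable (cyl n t s y : set Om).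
Proof. by apply: sub_sigma_algebra; exists n, t, s, y. Qed.

Lemma L0_meas i a b c : measurable [set w : Om | (ce i w <= a)%R /\ (cs i w <= b)%R /\ cy i w <= c].
Proof.
have -> : [set w : Om | (ce i w <= a)%R /\ (cs i w <= b)%R /\ cy i w <= c] =
  \bigcup_k cyl i.+1 (fun j => if j == i then a else k%:R)
                     (fun j => if j == i then b else k%:R)
                     (fun j => if j == i then c else +oo).
  apply/seteqP; split => w /=.
    move=> H.
    have [k1 Hk1] := bound_nat (fun j => Num.max (ce j w) (cs j w)) i.
    exists k1 => // j; rewrite ltnS leq_eqVlt => /orP [/eqP ->|hj]; first by rewrite eqxx.
    rewrite (ltn_eqF hj) leey; have := Hk1 _ hj; rewrite ge_max => /andP [h1 h2].
    by [].
  by move=> [k _ /(_ i (ltnSn i))]; rewrite eqxx.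
by apply: bigcupT_measurable => k; exact: cyl_meas.
Qed.


Lemma le_ce_meas i a : measurable [set w : Om | (ce i w <= a)%R].
Proof.
have -> : [set w : Om | (ce i w <= a)%R] =
   \bigcup_k [set w : Om | (ce i w <= a)%R /\ (cs i w <= k%:R)%R /\ cy i w <= +oo].
  apply/seteqP; split => w /=; last by case=> k _ [].
  move=> h; have [k Hk] := bound_nat (fun j => cs j w) i.+1.
  by exists k => //; split => //; split; [exact: Hk|exact: leey].
by apply: bigcupT_measurable => k; exact: L0_meas.
Qed.

Lemma le_cs_meas i a : measurable [set w : Om | (cs i w <= a)%R].
Proof.
have -> : [set w : Om | (cs i w <= a)%R] =
   \bigcup_k [set w : Om | (ce i w <= k%:R)%R /\ (cs i w <= a)%R /\ cy i w <= +oo].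
  apply/seteqP; split => w /=; last by case=> k _ [? []].
  move=> h; have [k Hk] := bound_nat (fun j => ce j w) i.+1.
  by exists k => //; split; [exact: Hk|split => //; exact: leey].
by apply: bigcupT_measurable => k; exact: L0_meas.
Qed.

Lemma le_cy_meas i a : measurable [set w : Om | cy i w <= a].
Proof.
have -> : [set w : Om | cy i w <= a] =
   \bigcup_k [set w : Om | (ce i w <= k%:R)%R /\ (cs i w <= k%:R)%R /\ cy i w <= a].
  apply/seteqP; split => w /=; last by case=> k _ [? []].
  move=> h; have [k Hk] := bound_nat (fun j => Num.max (ce j w) (cs j w)) i.+1.
  exists k => //; have := Hk i (ltnSn i); rewrite ge_max => /andP[h1 h2].
  by [].
by apply: bigcupT_measurable => k; exact: L0_meas.
Qed.

Lemma ce_mfun i : measurable_fun setT (ce i).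
Proof.
apply: (measurability (RGenOInfty.G (R:=R))); first exact: RGenOInfty.measurableE.
move=> _ [_ [a ->] <-]; rewrite setTI.
have -> : ce i @^-1` `]a, +oo[%classic = ~` [set w : Om | (ce i w <= a)%R].
  by apply/seteqP; split => w /=; rewrite in_itv /= andbT ?ltNge => /negP.
by apply: measurableC; exact: le_ce_meas.
Qed.

Lemma cs_mfun i : measurable_fun setT (cs i).
Proof.
apply: (measurability (RGenOInfty.G (R:=R))); first exact: RGenOInfty.measurableE.
move=> _ [_ [a ->] <-]; rewrite setTI.
have -> : cs i @^-1` `]a, +oo[%classic = ~` [set w : Om | (cs i w <= a)%R].
  by apply/seteqP; split => w /=; rewrite in_itv /= andbT ?ltNge => /negP.
by apply: measurableC; exact: le_cs_meas.
Qed.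

Lemma cy_mfun i : measurable_fun setT (cy i).
Proof.
apply: (measurability (ErealGenOInfty.G (R:=R))); first exact: ErealGenOInfty.measurableE.
move=> _ [_ [a ->] <-]; rewrite setTI.
have -> : cy i @^-1` `]a%:E, +oo[%classic = ~` [set w : Om | cy i w <= a%:E].
  by apply/seteqP; split => w /=; rewrite in_itv /= andbT ?ltNge => /negP.
by apply: measurableC; exact: le_cy_meas.
Qed.


Definition mkOm {T : Type} (a b : nat -> T -> R) (c : nat -> T -> \bar R) (w : T) : Om :=
  fun i => (a i w, b i w, c i w).

Lemma cyl_set_meas d (T : measurableType d) (a b : nat -> T -> R) (c : nat -> T -> \bar R) :
  (forall i, measurable_fun setT (a i)) -> (forall i, measurable_fun setT (b i)) ->
  (forall i, measurable_fun setT (c i)) ->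
  forall n t s y, measurable [set w | forall i, (i < n)%N ->
     (a i w <= t i)%R /\ (b i w <= s i)%R /\ c i w <= y i].
Proof.
move=> ma mb mc n t s y.
have -> : [set w | forall i, (i < n)%N -> (a i w <= t i)%R /\ (b i w <= s i)%R /\ c i w <= y i]
  = \bigcap_i (if (i < n)%N then
      (a i @^-1` `]-oo, t i]) `&` ((b i @^-1` `]-oo, s i]) `&` (c i @^-1` `[-oo, y i]))
      else setT).
  apply/seteqP; split => w /=.
    move=> H i _; case: ifP => // hi; have [h1 [h2 h3]] := H i hi.
    by rewrite /= !in_itv /= h1 h2 h3 leNye ?andbT.
  move=> H i hi; have := H i I; rewrite hi /= !in_itv /= => -[h1 [h2 /andP[_ h3]]].
  by [].
apply: bigcapT_measurable => i /=; case: (i < n)%N; last exact: measurableT.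
apply: measurableI; first by rewrite -[X in measurable X]setTI; apply: ma => //.
apply: measurableI; first by rewrite -[X in measurable X]setTI; apply: mb => //.
by rewrite -[X in measurable X]setTI; apply: mc => //; exact: emeasurable_itv.
Qed.

Lemma mkOm_mfun d (T : measurableType d) (a b : nat -> T -> R) (c : nat -> T -> \bar R) :
  (forall i, measurable_fun setT (a i)) -> (forall i, measurable_fun setT (b i)) ->
  (forall i, measurable_fun setT (c i)) -> measurable_fun setT (mkOm a b c).
Proof.
move=> ma mb mc; apply: (@measurability _ _ T Om setT (mkOm a b c) Gcyl) => //.
move=> _ [_ [n [t [s [y ->]]]] <-]; rewrite setTI.
exact: cyl_set_meas.
Qed.

End Omega.
Arguments mkOm {R T}.
Arguments cyl {R}.
Arguments ce {R}.
Arguments cs {R}.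
Arguments cy {R}.
Arguments mkOm_mfun {R d T a b c}.
Arguments bound_nat {R}.


Section Transfer.
Variable R : realType.

Definition thr {d} {T : orderType d} (n1 n2 : nat) (u v : nat -> T) (i : nat) : T :=
  if (i < n1)%N then (if (i < n2)%N then Order.min (u i) (v i) else u i) else v i.

Lemma thr_le {d} {T : orderType d} n1 n2 (u v : nat -> T) i (x : T) : (i < maxn n1 n2)%N ->
  (x <= thr n1 n2 u v i)%O = ((i < n1)%N ==> (x <= u i)%O) && ((i < n2)%N ==> (x <= v i)%O).
Proof.
rewrite /thr leq_max; case: (ltnP i n1) => h1; case: (ltnP i n2) => h2 //=.
- by rewrite le_min.
- by rewrite andbT.
Qed.

Lemma Gcyl_setI : setI_closed (Gcyl R).
Proof.
move=> _ _ [n1 [t1 [s1 [y1 ->]]]] [n2 [t2 [s2 [y2 ->]]]].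
exists (maxn n1 n2), (thr n1 n2 t1 t2), (thr n1 n2 s1 s2), (thr n1 n2 y1 y2).
apply/seteqP; split => w /=.
  move=> [H1 H2] i hi; rewrite !thr_le //.
  case h1: (i < n1)%N; case h2: (i < n2)%N => /=.
  - by have [-> [-> ->]] := H1 i h1; have [-> [-> ->]] := H2 i h2.
  - by have [-> [-> ->]] := H1 i h1.
  - by have [-> [-> ->]] := H2 i h2.
  - by move: hi; rewrite leq_max h1 h2.
move=> H; split => i hi.
  have hm : (i < maxn n1 n2)%N by rewrite leq_max hi.
  have [+ [+ +]] := H i hm; rewrite !thr_le // hi /=.
  by move=> /andP[-> _] /andP[-> _] /andP[-> _].
have hm : (i < maxn n1 n2)%N by rewrite leq_max hi orbT.
have [+ [+ +]] := H i hm; rewrite !thr_le // hi /= ?implybT ?andbT.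
by move=> /andP[_ ->] /andP[_ ->] /andP[_ ->].
Qed.

Lemma transfer d1 (T1 : measurableType d1) (P1 : probability T1 R)
  (a1 b1 : nat -> T1 -> R) (c1 : nat -> T1 -> \bar R)
  d2 (T2 : measurableType d2) (P2 : probability T2 R)
  (a2 b2 : nat -> T2 -> R) (c2 : nat -> T2 -> \bar R) :
  (forall i, measurable_fun setT (a1 i)) -> (forall i, measurable_fun setT (b1 i)) ->
  (forall i, measurable_fun setT (c1 i)) ->
  (forall i, measurable_fun setT (a2 i)) -> (forall i, measurable_fun setT (b2 i)) ->
  (forall i, measurable_fun setT (c2 i)) ->
  (forall n t s y, P1 (mkOm a1 b1 c1 @^-1` cyl n t s y) = P2 (mkOm a2 b2 c2 @^-1` cyl n t s y)) ->
  forall B : set (Om R), measurable B ->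
  P1 (mkOm a1 b1 c1 @^-1` B) = P2 (mkOm a2 b2 c2 @^-1` B).
Proof.
move=> ma1 mb1 mc1 ma2 mb2 mc2 H B mB.
have mf1 := mkOm_mfun ma1 mb1 mc1.
have mf2 := mkOm_mfun ma2 mb2 mc2.
have := @measure_unique _ R (Om R) (Gcyl R) (fun _ => setT) erefl (@Gcyl_setI) _ _
  (pushforward P1 (mkOm a1 b1 c1)) (pushforward P2 (mkOm a2 b2 c2)) _ _ B mB.
apply.
- by move=> _; exists 0%N, (fun _ => 0%R), (fun _ => 0%R), (fun _ => 0);
     apply/seteqP; split => w //= _ i.
- by rewrite bigcup_const.
- by move=> _ [n [t [s [y ->]]]]; exact: H.
- by move=> _ /=; rewrite /pushforward preimage_setT probability_setT ltry.
Unshelve. all: by [].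
Qed.


Lemma qi_cyl2 d (T : measurableType d) (P : probability T R) lam Psi e S Y :
  queue_input P lam Psi e S Y -> forall n t s y,
  P (mkOm e S Y @^-1` cyl n t s y) = (\prod_(i < n) (expcdf lam (t i) * Psi (s i) (y i)))%:E.
Proof.
case=> _ _ _ _ hP n t s y; rewrite -hP; congr (P _).
Qed.

Lemma qi_cyl1 d (T : measurableType d) (P : probability T R) lam Psi e S Y :
  queue_input P lam Psi e S Y -> forall n t s y,
  P (mkOm e S (fun _ _ => +oo) @^-1` cyl n t s y) =
  (\prod_(i < n) (expcdf lam (t i) * Psi_inf Psi (s i) (y i)))%:E.
Proof.
case=> _ _ _ _ hP n t s y.
have [/existsP [j hy]|] := boolP [exists j : 'I_n, y j != +oo].
  rewrite (bigD1 j) //= /Psi_inf (negbTE hy) mulr0 mul0r.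
  have -> : mkOm e S (fun _ _ => +oo) @^-1` cyl n t s y = set0.
    apply/seteqP; split => w //= /(_ j (ltn_ord j)) [_ [_]].
    by rewrite leye_eq (negbTE hy).
  by rewrite measure0.
rewrite negb_exists => /forallP hy.
have -> : mkOm e S (fun _ _ => +oo) @^-1` cyl n t s y =
  \bigcap_(i in [set i | (i < n)%N])
     [set w | (e i w <= t i)%R /\ (S i w <= s i)%R /\ Y i w <= (fun _ => +oo) i].
  apply/seteqP; split => w /=.
    by move=> H i /= hi; have [h1 [h2 _]] := H i hi; split => //; split => //; exact: leey.
  move=> H i hi; have [h1 [h2 _]] := H i hi; split => //; split => //.
  by have := hy (Ordinal hi); rewrite negbK => /eqP ->.
rewrite hP; congr (_%:E); apply: eq_bigr => i _.
by have := hy i; rewrite negbK /Psi_inf => /eqP ->; rewrite eqxx.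
Qed.


Lemma Psi0 (Psi : R -> \bar R -> R) : in_L Psi -> Psi 0%R +oo = 0%R.
Proof.
case=> mu [hsupp hcdf].
have mA : measurable [set z : (R * \bar R)%type | (z.1 <= 0)%R /\ z.2 <= +oo].
  have -> : [set z : (R * \bar R)%type | (z.1 <= 0)%R /\ z.2 <= +oo] = fst @^-1` `]-oo, 0%R].
    by apply/seteqP; split => z /=; rewrite in_itv /= ?leey => -[] //.
  by rewrite -[X in measurable X]setTI; apply: measurable_fst => //.
have mS : measurable [set z : (R * \bar R)%type | (0 < z.1)%R /\ 0 < z.2].
  have -> : [set z : (R * \bar R)%type | (0 < z.1)%R /\ 0 < z.2] =
     (fst @^-1` `]0%R, +oo[) `&` (snd @^-1` `]0%E, +oo]).
    apply/seteqP; split => z /=; rewrite !in_itv /= ?leey ?andbT //.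
  apply: measurableI.
    by rewrite -[X in measurable X]setTI; apply: measurable_fst => //.
  by rewrite -[X in measurable X]setTI; apply: measurable_snd => //; exact: emeasurable_itv.
have h : mu [set z : (R * \bar R)%type | (z.1 <= 0)%R /\ z.2 <= +oo] <= 0.
  rewrite -(subee (x := 1)) // -[X in _ - X]hsupp -probability_setC //.
  apply: le_measure; rewrite ?inE //; first exact: measurableC.
  by move=> z /= [h1 _] [h2 _]; move: h1; rewrite leNgt h2.
apply/eqP; rewrite eq_le -!lee_fin hcdf h /=; exact: measure_ge0.
Qed.


Lemma S_neg_negligible d (T : measurableType d) (P : probability T R) lam Psi e S Y :
  in_L Psi -> queue_input P lam Psi e S Y ->
  P.-negligible (\bigcup_i [set w | (S i w < 0)%R]).
Proof.
move=> hL hq; have [me mS _ _ _] := hq.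
apply: negligible_bigcup => i.
pose C k := mkOm e S (fun _ _ => +oo) @^-1`
   cyl i.+1 (fun _ => k%:R) (fun j => if j == i then 0%R else k%:R) (fun _ => +oo).
have mC k : measurable (C k).
  rewrite /C -[X in measurable X]setTI.
  apply: (mkOm_mfun me mS) => //.
  exact: cyl_meas.
have nC : P.-negligible (\bigcup_k C k).
  apply: negligible_bigcup => k; exists (C k); split => //.
  rewrite /C /= (qi_cyl1 _ _ _ _ _ _ _ _ hq) (bigD1 (Ordinal (ltnSn i))) //= eqxx /Psi_inf /=.
  by rewrite (Psi0 _ hL) mulr0 mul0r.
case: nC => B [mB PB sB]; exists B; split => // w /= hw; apply: sB.
have [k Hk] := bound_nat (fun j => Num.max (e j w) (S j w)) i.+1.
exists k => // j hj /=; have := Hk j hj; rewrite ge_max => /andP [h1 h2].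
split => //; split; last exact: leey.
by case: ifP => // /eqP ->; exact: ltW.
Qed.

End Transfer.


Section Seq.
Variable R : realType.
Variables (x : R) (e S : nat -> R) (Y : nat -> \bar R).
Hypothesis e0 : forall i, (0 <= e i)%R.

Local Notation st := (start e).
Local Notation wp := (wpost x e S Y).

Lemma stS n : st n.+1 = (st n + e n)%R.
Proof. by rewrite /start big_ord_recr. Qed.

Lemma st0 : st 0 = 0%R.
Proof. by rewrite /start big_ord0. Qed.

Lemma st_mono m n : (m <= n)%N -> (st m <= st n)%R.
Proof.
move=> /subnKC <-; elim: (n - m)%N => [|k IH]; first by rewrite addn0.
by rewrite addnS stS (le_trans IH) // lerDl.
Qed.

Lemma st_ge0 n : (0 <= st n)%R.
Proof. by rewrite -st0 st_mono. Qed.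

Definition inI t n := (st n <= t)%R /\ (t < st n.+1)%R.

Lemma inI_unique t n m : inI t n -> inI t m -> n = m.
Proof.
move=> [h1 h2] [h3 h4]; apply/eqP; rewrite eqn_leq; apply/andP; split.
  rewrite leqNgt; apply/negP => hmn.
  by have := lt_le_trans h4 (st_mono _ _ hmn); rewrite ltNge h1.
rewrite leqNgt; apply/negP => hmn.
by have := lt_le_trans h2 (st_mono _ _ hmn); rewrite ltNge h3.
Qed.

Definition idx t := xget 0%N [set n | (st n <= t)%R /\ (t < st n.+1)%R].

Lemma idxE t n : inI t n -> idx t = n.
Proof. by move=> h; apply: xget_unique => // m hm; exact: inI_unique hm h. Qed.

Lemma idxN t : (forall n, ~ inI t n) -> idx t = 0%N.
Proof. by move=> h; apply: xgetPN. Qed.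

Lemma workloadE t : workload x e S Y t = (Num.max (wp (idx t) - (t - st (idx t))) 0)%R.
Proof. by []. Qed.

Lemma notinI_ge t : (0 <= t)%R -> (forall n, ~ inI t n) -> forall n, (st n <= t)%R.
Proof.
move=> t0 h; elim=> [|n IH]; first by rewrite st0.
by rewrite leNgt; apply/negP => hlt; apply: (h n).
Qed.

Lemma wp_dead n : (wp n <= e n)%R -> wp n.+1 = 0%R.
Proof. by move=> h /=; rewrite ltNge subr_le0 h. Qed.

Lemma wp_stay n : (0 < e n)%R -> wp n = 0%R -> wp n.+1 = 0%R.
Proof. by move=> h hw; apply: wp_dead; rewrite hw ltW. Qed.

Definition zeta n : \bar R :=
  if (wp n <= e n)%R then ((st n + Num.max (wp n) 0)%R)%:E else +oo.

Definition tau' : \bar R :=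
  Order.min (einfs zeta 0%N) (Order.max (esups (fun n => (st n)%:E) 0%N) x%:E).

Lemma einfs0_le n : einfs zeta 0%N <= zeta n.
Proof. by apply: ereal_inf_lbound; exists n. Qed.

Lemma st_le_esups n : (st n)%:E <= esups (fun n => (st n)%:E) 0%N.
Proof. by apply: ereal_sup_ubound; exists n. Qed.

Lemma tau_ge : tau' <= tau x e S Y.
Proof.
apply: le_ereal_inf_tmp => _ [t [t0 Wt] <-].
rewrite workloadE in Wt.
have [[n hn]|hN] := pselect (exists n, inI t n).
  rewrite (idxE _ _ hn) in Wt; rewrite /tau' ge_min; apply/orP; left.
  apply: (le_trans (einfs0_le n)).
  have hw : (wp n <= t - st n)%R.
    by move: Wt => /eqP; rewrite eq_le ge_max => /andP[/andP[+ _] _]; rewrite subr_le0.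
  have [h1 h2] := hn.
  rewrite /zeta ifT; last first.
    by apply: (le_trans hw); rewrite lerBlDl -stS ltW.
  by rewrite lee_fin -lerBrDl ge_max hw subr_ge0 h1.
have hN' : forall n, ~ inI t n by move=> n hn; apply: hN; exists n.
rewrite (idxN _ hN') /= st0 subr0 in Wt.
rewrite /tau' ge_min; apply/orP; right; rewrite ge_max; apply/andP; split.
  by apply: ge_ereal_sup => _ [n _ <-]; rewrite lee_fin; exact: notinI_ge.
by move: Wt => /eqP; rewrite eq_le ge_max => /andP[/andP[+ _] _]; rewrite subr_le0 lee_fin.
Qed.


Lemma tau_le : (forall i, (0 < e i)%R) -> (0 < x)%R -> tau x e S Y <= tau'.
Proof.
move=> epos x0.
have [[n0 hn0]|hB] := pselect (exists n, (wp n <= e n)%R).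
  have exP : exists n, (fun n => (wp n <= e n)%R) n by exists n0.
  case: (ex_minnP exP) => N wpN Nmin.
  have wp_after k : wp (N + k).+1 = 0%R.
    elim: k => [|k IH]; first by rewrite addn0; exact: wp_dead.
    by rewrite addnS; apply: wp_stay.
  pose zN := (st N + Num.max (wp N) 0)%R.
  have hmax : (Num.max (wp N) 0 <= e N)%R by rewrite ge_max wpN ltW.
  have hz : (zN <= st N.+1)%R by rewrite stS lerD2l.
  have htau' : zN%:E <= tau'.
    rewrite /tau' le_min; apply/andP; split.
      apply: le_ereal_inf_tmp => _ [n _ <-]; rewrite /zeta; case: ifP => h; last exact: leey.
      have := Nmin n h; rewrite leq_eqVlt => /orP [/eqP <-|hNn]; first by [].
      have -> : n = (N + (n - N.+1)).+1 by rewrite -addnS -subSn // subSS subnKC // ltnW.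
      rewrite wp_after maxxx addr0 lee_fin (le_trans hz) // st_mono //.
      by rewrite ltnS leq_addr.
    rewrite le_max; apply/orP; left.
    by apply: le_trans (st_le_esups N.+1); rewrite lee_fin.
  apply: le_trans htau'; apply: ereal_inf_lbound; exists zN => //; split.
    by rewrite addr_ge0 // ?st_ge0 // le_max lexx orbT.
  rewrite workloadE.
  have [hlt|hge] := ltP (Num.max (wp N) 0)%R (e N).
    rewrite (idxE _ N); last by split; [rewrite lerDl le_max lexx orbT|rewrite stS ltrD2l].
    apply/eqP; rewrite eq_le ge_max lexx le_max lexx orbT !andbT /= subr_le0.
    by rewrite addrC addKr le_max lexx.
  have heq : (Num.max (wp N) 0 = e N)%R by apply/eqP; rewrite eq_le hmax hge.
  have hzN : zN = st N.+1 by rewrite /zN heq stS.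
  rewrite hzN (idxE _ N.+1); last by split => //; rewrite [X in (_ < X)%R]stS ltrDl.
  by rewrite subrr subr0 -(addn0 N) wp_after maxxx.
have hB' : forall n, (e n < wp n)%R by move=> n; rewrite ltNge; apply/negP => h; apply: hB; exists n.
have hinf : einfs zeta 0%N = +oo.
  apply/eqP; rewrite eq_le leey /=; apply: le_ereal_inf_tmp => _ [n _ <-].
  by rewrite /zeta ifF // leNgt hB'.
rewrite /tau' hinf.
case hE : (esups (fun n => (st n)%:E) 0%N) => [L| |]; last first.
- have := st_le_esups 0; rewrite hE leeNy_eq => /eqP; discriminate.
- by rewrite leey.
have hL n : (st n <= L)%R by rewrite -lee_fin -hE st_le_esups.
pose u0 := Num.max L x.
have hu0 : (Order.max L%:E x%:E) = u0%:E.
  rewrite /u0; case: (leP L x) => h; first by rewrite !max_r ?lee_fin.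
  by rewrite !max_l ?lee_fin // ltW.
rewrite hu0 (_ : Order.min +oo u0%:E = u0%:E); last by rewrite min_r // leey.
apply: ereal_inf_lbound; exists u0 => //; split.
  by rewrite le_max (ltW x0) orbT.
have hN : forall n, ~ inI u0 n.
  move=> n [_ h]; have := hL n.+1; rewrite leNgt => /negP; apply.
  by apply: (le_lt_trans _ h); rewrite le_max lexx.
rewrite workloadE (idxN _ hN) /= st0 subr0.
apply/eqP; rewrite eq_le ge_max lexx andbT le_max lexx orbT andbT subr_le0.
by rewrite le_max lexx orbT.
Qed.

End Seq.


Section Path.
Variable R : realType.
Variables (x : R) (e S : nat -> R) (Y : nat -> \bar R).
Hypothesis x0 : (0 <= x)%R.
Hypothesis S0 : forall i, (0 <= S i)%R.

Local Notation wY := (wpost x e S Y).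
Local Notation wO := (wpost x e S (fun _ => +oo%E)).

Lemma wp_mono n : (wY n <= wO n)%R /\ (0 <= wO n)%R.
Proof.
elim: n => [|n [IH1 IH2]] /=; first by split.
have hv : (wY n - e n <= wO n - e n)%R by rewrite lerD2r.
rewrite leey.
have [hY|hY] := ltP 0%R (wY n - e n)%R.
  have hO : (0 < wO n - e n)%R := lt_le_trans hY hv.
  rewrite hO; split; last by rewrite addr_ge0 // ltW.
  by apply: lerD => //; case: ifP.
by case: ifP => h; split => //; rewrite addr_ge0 // ltW.
Qed.

Lemma W_mono t : (workload x e S Y t <= workload x e S (fun _ => +oo%E) t)%R.
Proof.
rewrite !workloadE ge_max !le_max lexx !orbT andbT lerD2r; apply/orP; left.
by case: (wp_mono (idx _ e t)).
Qed.

Lemma W_ge0 (Y' : nat -> \bar R) t : (0 <= workload x e S Y' t)%R.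
Proof. by rewrite workloadE le_max lexx orbT. Qed.

Lemma tau_mono : tau x e S Y <= tau x e S (fun _ => +oo%E).
Proof.
apply: ereal_inf_le_tmp => _ [t [t0 Wt] <-]; exists t => //; split => //.
apply/eqP; rewrite eq_le W_ge0 andbT -Wt; exact: W_mono.
Qed.

Variable g : R -> R.
Hypothesis g_ge0 : forall u : R, (0 <= u)%R -> (0 <= g u)%R.
Hypothesis g_nd : forall u v : R, (0 <= u)%R -> (u <= v)%R -> (g u <= g v)%R.

Definition Dom (Y' : nat -> \bar R) := [set t : R | (0 <= t)%R /\ t%:E < tau x e S Y'].
Definition integrand (Y' : nat -> \bar R) :=
  (fun t => (g (workload x e S Y' t))%:E) \_ (Dom Y').

Lemma integrand_ge0 Y' t : 0 <= integrand Y' t.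
Proof. by rewrite /integrand /patch; case: ifP => // _; rewrite lee_fin g_ge0 // W_ge0. Qed.

Lemma AqI Y' : Aq g x e S Y' = \int[lebesgue_measure]_t integrand Y' t.
Proof. by rewrite /Aq integral_mkcond. Qed.

Lemma Aq_mono : measurable_fun setT (integrand Y) ->
  measurable_fun setT (integrand (fun _ => +oo%E)) ->
  Aq g x e S Y <= Aq g x e S (fun _ => +oo%E).
Proof.
move=> mY mO; rewrite !AqI.
apply: (ge0_le_integral _ measurableT).
- by move=> t _; exact: integrand_ge0.
- exact: mY.
- exact: mO.
move=> t _; rewrite /integrand /patch; case: ifP => /asboolP hD; last exact: integrand_ge0.
have hD' : Dom (fun _ => +oo%E) t.
  by case: hD => h1 h2; split => //; exact: lt_le_trans h2 tau_mono.
rewrite ifT; last exact/asboolP.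
rewrite lee_fin; apply: g_nd; [exact: W_ge0|exact: W_mono].
Qed.
End Path.


Section Core.
Variable R : realType.
Variable x : R.

Definition ep i (w : Om R) : R := if (0 < ce i w)%R then ce i w else 1%R.

Lemma ep_gt0 i w : (0 < ep i w)%R.
Proof. by rewrite /ep; case: ifP. Qed.

Lemma ep_mfun i : measurable_fun setT (ep i).
Proof.
apply: measurable_fun_ifT; last exact: measurable_cst.
  by apply: measurable_fun_ltr; [exact: measurable_cst|exact: ce_mfun].
exact: ce_mfun.
Qed.

Definition eW (w : Om R) := fun i => ep i w.
Definition sW (w : Om R) := fun i => cs i w.
Definition yW (w : Om R) := fun i => cy i w.

Definition stW n (w : Om R) := start (eW w) n.
Lemma stW_mfun n : measurable_fun setT (stW n).
Proof. by rewrite /stW /start; apply: measurable_sum => i; exact: ep_mfun. Qed.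

Definition wpW n (w : Om R) := wpost x (eW w) (sW w) (yW w) n.
Lemma wpW_mfun n : measurable_fun setT (wpW n).
Proof.
elim: n => [|n IH]; first exact: measurable_cst.
have mv : measurable_fun setT (fun w => wpW n w - ep n w)%R.
  by apply: measurable_funB => //; exact: ep_mfun.
rewrite /wpW /=.
apply: measurable_fun_ifT; last exact: measurable_cst.
  by apply: measurable_fun_ltr => //; exact: measurable_cst.
apply: measurable_funD => //.
apply: measurable_fun_ifT; [|exact: cs_mfun|exact: measurable_cst].
apply: measurable_fun_lee; last exact: cy_mfun.
by apply: measurableT_comp => //; exact: EFin_measurable.
Qed.


Lemma bool_meas d (T : measurableType d) (b : T -> bool) :
  measurable_fun setT b -> measurable [set t | b t].
Proof.
move=> mb; have -> : [set t | b t] = setT `&` b @^-1` [set true].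
  by apply/seteqP; split => t /=; [move=> ->|case].
exact: mb.
Qed.

Definition AW n := [set p : (Om R * R)%type | (stW n p.1 <= p.2)%R /\ (p.2 < stW n.+1 p.1)%R].

Lemma AW_meas n : measurable (AW n).
Proof.
have -> : AW n = [set p | (stW n p.1 <= p.2)%R] `&` [set p | (p.2 < stW n.+1 p.1)%R].
  by [].
apply: measurableI; apply: bool_meas.
  apply: measurable_fun_ler => //.
  by apply: measurableT_comp => //; exact: stW_mfun.
apply: measurable_fun_ltr => //.
by apply: measurableT_comp => //; exact: stW_mfun.
Qed.

Definition fW n (p : (Om R * R)%type) : R := (Num.max (wpW n p.1 - (p.2 - stW n p.1)) 0)%R.

Lemma fW_mfun n : measurable_fun setT (fW n).
Proof.
apply: measurable_maxr; last exact: measurable_cst.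
apply: measurable_funB.
  by apply: measurableT_comp => //; exact: wpW_mfun.
apply: measurable_funB => //.
by apply: measurableT_comp => //; exact: stW_mfun.
Qed.


Definition WW (p : (Om R * R)%type) : R := workload x (eW p.1) (sW p.1) (yW p.1) p.2.

Lemma eW_ge0 w i : (0 <= eW w i)%R.
Proof. exact/ltW/ep_gt0. Qed.

Lemma WW_cases p : (exists n, AW n p /\ WW p = fW n p) \/
                   ((forall n, ~ AW n p) /\ WW p = fW 0 p).
Proof.
have [[n hn]|hN] := pselect (exists n, AW n p).
  left; exists n; split => //.
  by rewrite /WW workloadE (idxE _ _ (eW_ge0 p.1) _ _ hn).
right; have hN' : forall n, ~ AW n p by move=> n hn; apply: hN; exists n.
split => //; rewrite /WW workloadE (idxN _ _ _ hN').
by [].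
Qed.

Lemma AW_unique p n m : AW n p -> AW m p -> n = m.
Proof. exact: (inI_unique _ _ (eW_ge0 p.1)). Qed.

Lemma WW_mfun : measurable_fun setT WW.
Proof.
move=> _ B mB; rewrite setTI.
have mfB n : measurable (fW n @^-1` B).
  by have := fW_mfun n measurableT _ mB; rewrite setTI.
have -> : WW @^-1` B = (\bigcup_n (AW n `&` fW n @^-1` B)) `|`
                       (~` (\bigcup_n AW n) `&` fW 0 @^-1` B).
  apply/seteqP; split => p /=.
    case: (WW_cases p) => [[n [hA ->]]|[hN ->]] hB.
      by left; exists n.
    by right; split => // -[n _ hA]; exact: (hN n).
  case=> [[n _ [hA hB]]|[hN hB]]; case: (WW_cases p) => [[m [hA' ->]]|[hN' ->]].
  - by rewrite (AW_unique _ _ _ hA' hA).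
  - by exfalso; exact: (hN' n).
  - by exfalso; apply: hN; exists m.
  - by [].
apply: measurableU.
  by apply: bigcupT_measurable => n; apply: measurableI => //; exact: AW_meas.
apply: measurableI => //; apply: measurableC.
by apply: bigcupT_measurable => n; exact: AW_meas.
Qed.


Definition zetaW n (w : Om R) := zeta R x (eW w) (sW w) (yW w) n.

Lemma zetaW_mfun n : measurable_fun setT (zetaW n).
Proof.
rewrite /zetaW /zeta.
apply: measurable_fun_ifT; last exact: measurable_cst.
  by apply: measurable_fun_ler; [exact: wpW_mfun|exact: ep_mfun].
apply: measurableT_comp; first exact: EFin_measurable.
apply: measurable_funD; first exact: stW_mfun.
by apply: measurable_maxr; [exact: wpW_mfun|exact: measurable_cst].
Qed.

Definition tauW (w : Om R) := tau' R x (eW w) (sW w) (yW w).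

Lemma tauW_mfun : measurable_fun setT tauW.
Proof.
rewrite /tauW /tau'.
apply: measurable_mine.
  exact: (measurable_fun_einfs (f := zetaW) zetaW_mfun 0%N).
apply: measurable_maxe; last exact: measurable_cst.
apply: (measurable_fun_esups (f := fun n w => (stW n w)%:E)) => n.
by apply: measurableT_comp; [exact: EFin_measurable|exact: stW_mfun].
Qed.

Lemma tauWE (x0 : (0 < x)%R) w : tau x (eW w) (sW w) (yW w) = tauW w.
Proof.
apply/le_anti/andP; split.
  by apply: tau_le => //; [exact: eW_ge0|move=> i; exact: ep_gt0].
by apply: tau_ge; exact: eW_ge0.
Qed.

Definition DW := [set p : (Om R * R)%type | (0 <= p.2)%R /\ p.2%:E < tauW p.1].

Lemma DW_meas : measurable DW.
Proof.
have -> : DW = [set p | (0 <= p.2)%R] `&` [set p | p.2%:E < tauW p.1] by [].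
apply: measurableI; apply: bool_meas.
  by apply: measurable_fun_ler => //; exact: measurable_cst.
apply: measurable_fun_lte.
  by apply: measurableT_comp => //; exact: EFin_measurable.
by apply: measurableT_comp => //; exact: tauW_mfun.
Qed.


Variable g : R -> R.
Hypothesis g_ge0 : forall u : R, (0 <= u)%R -> (0 <= g u)%R.
Hypothesis g_nd : forall u v : R, (0 <= u)%R -> (u <= v)%R -> (g u <= g v)%R.

Definition g' (u : R) : R := g (Num.max u 0%R).

Lemma g'_mfun : measurable_fun setT g'.
Proof.
apply: nondecreasing_measurable => // u v uv; rewrite /g'; apply: g_nd.
  by rewrite le_max lexx orbT.
by rewrite ge_max !le_max uv lexx !orbT.
Qed.

Definition hW := (fun p => (g' (WW p))%:E) \_ DW.

Lemma hW_mfun : measurable_fun setT hW.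
Proof.
apply/(measurable_restrictT _ DW_meas); apply: measurable_funTS.
apply: measurableT_comp; first exact: EFin_measurable.
by apply: measurableT_comp; [exact: g'_mfun|exact: WW_mfun].
Qed.

Lemma hW_ge0 p : 0 <= hW p.
Proof.
rewrite /hW /patch; case: ifP => // _; rewrite lee_fin /g' g_ge0 //.
by rewrite le_max lexx orbT.
Qed.

Hypothesis x0 : (0 < x)%R.

Lemma integrand_eq w : integrand R x (eW w) (sW w) g (yW w) = fun t => hW (w, t).
Proof.
apply/funext => t; rewrite /integrand /hW /patch /Dom tauWE //.
have -> : g' (WW (w, t)) = g (workload x (eW w) (sW w) (yW w) t).
  by rewrite /g' /WW /= max_l // W_ge0.
by [].
Qed.


Lemma Aq_fubini w : Aq g x (eW w) (sW w) (yW w) = fubini_F lebesgue_measure hW w.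
Proof. by rewrite AqI integrand_eq. Qed.

Lemma F_mfun : measurable_fun setT (fun w => Aq g x (eW w) (sW w) (yW w)).
Proof.
rewrite (_ : (fun w => Aq g x (eW w) (sW w) (yW w)) = fubini_F lebesgue_measure hW);
  last by apply/funext => w; exact: Aq_fubini.
exact: (@measurable_fun_fubini_tonelli_F _ _ _ _ _ lebesgue_measure hW hW_mfun hW_ge0).
Qed.

Lemma integrand_mfun w : measurable_fun setT (integrand R x (eW w) (sW w) g (yW w)).
Proof. by rewrite integrand_eq; exact: (measurable_fun_pair2 w hW_mfun). Qed.

End Core.


Lemma eW_mk (R : realType) (T : Type) (a b : nat -> T -> R) (c : nat -> T -> \bar R) w :
  (forall i, (0 < a i w)%R) -> eW R (mkOm a b c w) = (fun i => a i w).
Proof. by move=> h; apply/funext => i; rewrite /eW /ep /ce /mkOm /= h. Qed.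
Arguments eW_mk {R T a} b c {w}.

Theorem lemma2 (R : realType) (lam : R) (hlam : (0 < lam)%R)
  (x : R) (hx : (0 < x)%R)
  (Psi : R -> \bar R -> R) (hPsi : in_L Psi)
  (g : R -> R) (g_ge0 : forall u : R, (0 <= u)%R -> (0 <= g u)%R)
  (g_nd : forall u v : R, (0 <= u)%R -> (u <= v)%R -> (g u <= g v)%R)
  (d1 : measure_display) (T1 : measurableType d1) (P1 : probability T1 R)
  (e1 S1 : nat -> T1 -> R) (Y1 : nat -> T1 -> \bar R)
  (h1 : queue_input P1 lam Psi e1 S1 Y1)
  (d2 : measure_display) (T2 : measurableType d2) (P2 : probability T2 R)
  (e2 S2 : nat -> T2 -> R) (Y2 : nat -> T2 -> \bar R)
  (h2 : queue_input P2 lam (Psi_inf Psi) e2 S2 Y2)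
  (s : R) :
  P1 [set w | s%:E < Aq g x (fun i => e1 i w) (fun i => S1 i w) (fun i => Y1 i w)]
  <= P2 [set w | s%:E < Aq g x (fun i => e2 i w) (fun i => S2 i w) (fun i => Y2 i w)].
Proof.
have [me1 mS1 mY1 epos1 _] := h1.
have [me2 mS2 mY2 epos2 _] := h2.
have mO1 : forall i : nat, measurable_fun [set: T1] (fun _ : T1 => (+oo : \bar R)).
  by move=> i; exact: measurable_cst.
pose F := [set w : Om R | s%:E < Aq g x (eW R w) (sW R w) (yW R w)].
have mF : measurable F.
  have := emeasurable_fun_o_infty measurableT (F_mfun R x g g_ge0 g_nd hx) s%:E.
  by rewrite setTI.
have E1E : [set w | s%:E < Aq g x (fun i => e1 i w) (fun i => S1 i w) (fun i => Y1 i w)]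
   = mkOm e1 S1 Y1 @^-1` F.
  by apply/seteqP; split => w /=; rewrite /F /= (eW_mk _ _ (epos1^~ w)).
have E1'E : [set w | s%:E < Aq g x (fun i => e1 i w) (fun i => S1 i w) (fun i => +oo)]
   = mkOm e1 S1 (fun _ _ => +oo) @^-1` F.
  by apply/seteqP; split => w /=; rewrite /F /= (eW_mk _ _ (epos1^~ w)).
have E2E : [set w | s%:E < Aq g x (fun i => e2 i w) (fun i => S2 i w) (fun i => Y2 i w)]
   = mkOm e2 S2 Y2 @^-1` F.
  by apply/seteqP; split => w /=; rewrite /F /= (eW_mk _ _ (epos2^~ w)).
have mE1 : measurable (mkOm e1 S1 Y1 @^-1` F).
  by rewrite -[X in measurable X]setTI; apply: (mkOm_mfun me1 mS1 mY1).
have mE1' : measurable (mkOm e1 S1 (fun _ _ => +oo) @^-1` F).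
  by rewrite -[X in measurable X]setTI; apply: (mkOm_mfun me1 mS1 mO1).
have tr : P1 (mkOm e1 S1 (fun _ _ => +oo) @^-1` F) = P2 (mkOm e2 S2 Y2 @^-1` F).
  apply: (transfer _ _ _ _ _ _ _ _ _ _ _ _ _ me1 mS1 mO1 me2 mS2 mY2) => // n t s' y.
  by rewrite (qi_cyl1 _ _ _ _ _ _ _ _ _ h1) (qi_cyl2 _ _ _ _ _ _ _ _ _ h2).
rewrite E2E -tr E1E.
have [B [mB PB sB]] := S_neg_negligible _ _ _ _ _ _ _ _ _ hPsi h1.
apply: (le_trans (y := P1 ((mkOm e1 S1 (fun _ _ => +oo) @^-1` F) `|` B))).
  apply: le_measure; rewrite ?inE //; first exact: measurableU.
  move=> w /= hw.
  have [hS|hN] := pselect (forall i, (0 <= S1 i w)%R); last first.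
    right; apply: sB; apply: contra_notP hN => hN' i.
    by rewrite leNgt; apply/negP => hlt; apply: hN'; exists i.
  left; apply: (lt_le_trans hw).
  apply: (Aq_mono R x (eW R (mkOm e1 S1 Y1 w)) (sW R (mkOm e1 S1 Y1 w))
                  (yW R (mkOm e1 S1 Y1 w))) => //; first exact: ltW.
  - exact: (integrand_mfun R x g g_nd hx (mkOm e1 S1 Y1 w)).
  - exact: (integrand_mfun R x g g_nd hx (mkOm e1 S1 (fun _ _ => +oo) w)).
apply: (le_trans (measureU2 _ mE1' mB)).
have PB' : P1 B <= 0 by rewrite le_eqVlt; apply/orP; left; apply/eqP; exact: PB.
rewrite -[X in _ <= X]adde0; exact: leeD2l.
Qed.
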